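(* Let $M\ge\frac52$, $\mu=\frac{2}{2M+3}$, and consider Algorithm A run on an input whose optimal offline makespan is $1$. Fix any optimal offline schedule $S$ of the entire input (makespan $1$), and for each $j$ let $o_{j2}$ be the total size of those jobs among $1,\dots,j$ that $S$ assigns to $m_2$. Then for every $j\ge 0$, $y_j\ge \min\{1-\mu,\,o_{j2}\}$.
   Context: Model (two hierarchical machines with migration, bin stretching). Jobs $1,2,\dots,n$ arrive one by one ($n$ unknown in advance). Job $j$ has a size $p_j>0$ and a grade of service (GoS) $g_j\in\{1,2\}$; a job of GoS $1$ may only be processed on machine $m_1$, a job of GoS $2$ may be processed on $m_1$ or on $m_2$. The load of a machine is the total size of the jobs assigned to it, and the makespan is the maximum load. When job $j$ arrives, the algorithm must assign it to a machine, and at the same time it may reassign (migrate) previously arrived jobs to other machines (respecting the GoS constraints), provided that the total size of the migrated jobs is at most $M\cdot p_j$; $M\ge 0$ is the migration factor. Bin stretching: the optimal offline makespan of the complete input is known in advance and scaled to $1$. Notation: $Y_{j}$ is the set of jobs on $m_2$ just after job $j$ has been handled (including migrations), $y_j$ its total size, $y_0=0$. $Z$ denotes the set of GoS-2 jobs currently on $m_1$. Algorithm A (with $\mu=\frac{2}{2M+3}$). On arrival of job $j$: (i) if $g_j=1$ or $y_{j-1}\ge 1-\mu$, assign $j$ to $m_1$; (ii) else if $y_{j-1}+p_j\le 1+\mu$, assign $j$ to $m_2$; (iii) otherwise, among all GoS-2 jobs arrived so far (the current $Z$, the current $Y_{j-1}$, and $j$), choose a subset $W$ of maximum total size subject to total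 size at most $1$; rearrange so that exactly the jobs of $W$ are on $m_2$ and all other arrived jobs are on $m_1$. *)

(* Defs.v *)
From mathcomp Require Import all_boot all_order all_algebra.
Set Implicit Arguments. Unset Strict Implicit. Unset Printing Implicit Defensive.
Import Order.TTheory GRing.Theory Num.Theory.
Local Open Scope ring_scope.

Inductive gos := GoS1 | GoS2.
Definition is_gos2 (x : gos) : bool := if x is GoS2 then true else false.

Section Defs.
Variables (R : realFieldType) (n : nat).
(* Jobs are indexed by 'I_n in arrival order: job k (0-based) is the
   paper's job k+1. *)
Variables (p : 'I_n -> R) (g : 'I_n -> gos).

Definition load (A : {set 'I_n}) : R := \sum_(i in A) p i.

(* An offline schedule is given by the set S of jobs placed on m2
   (all others on m1); it is valid if it respects the GoS constraints. *)
Definition valid_schedule (S : {set 'I_n}) : Prop :=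
  forall i, i \in S -> g i = GoS2.

Definition makespan (S : {set 'I_n}) : R := Num.max (load (~: S)) (load S).

Definition opt_makespan_is_one : Prop :=
  (exists S, valid_schedule S /\ makespan S <= 1) /\
  (forall S, valid_schedule S -> 1 <= makespan S).

(* One step of Algorithm A, handling job k: Y is the set of jobs on m2
   before job k arrives, Y' the set just after job k is handled.
   (Arrived jobs not on m2 are on m1.) *)
Definition A_step (M : R) (k : 'I_n) (Y Y' : {set 'I_n}) : Prop :=
  let mu := 2 / (2 * M + 3) in
  let y := load Y in
  if ~~ is_gos2 (g k) || (1 - mu <= y) then Y' = Y
  else if y + p k <= 1 + mu then Y' = k |: Y
  else
    (* Z = GoS-2 jobs currently on m1 *)
    let Z := [set i : 'I_n | (i < k)%N && is_gos2 (g i) & i \notin Y] in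
    let C := Z :|: Y :|: [set k] in
    [/\ Y' \subset C, load Y' <= 1 &
        forall W : {set 'I_n}, W \subset C -> load W <= 1 -> load W <= load Y'].

(* Y : nat -> {set 'I_n} is a run of Algorithm A: Y j is the set Y_j of jobs
   on m2 just after job j (1-based) has been handled, Y 0 = empty. *)
Definition A_run (M : R) (Y : nat -> {set 'I_n}) : Prop :=
  Y 0%N = set0 /\
  forall (j : nat) (hj : (j < n)%N), A_step M (Ordinal hj) (Y j) (Y j.+1).

Definition o2 (S : {set 'I_n}) (j : nat) : R :=
  load [set i in S | (i < j)%N].

End Defs.

(* Main.v *)
Require Import Defs.
From mathcomp Require Import all_boot all_order all_algebra.
Import Order.TTheory GRing.Theory Num.Theory.
Local Open Scope ring_scope.

Lemma load_sub (R : realFieldType) (n : nat) (p : 'I_n -> R) (A B : {set 'I_n}) :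
  (forall i, 0 < p i) -> A \subset B -> load p A <= load p B.
Proof.
move=> pos sAB; rewrite /load [X in _ <= X](big_setID A) /= (setIidPr sAB) lerDl.
by apply: sumr_ge0 => i _; exact: ltW.
Qed.

Theorem mainTheorem2 (R : realFieldType) (n : nat) (p : 'I_n -> R)
    (g : 'I_n -> gos) (M : R) (Y : nat -> {set 'I_n}) (S : {set 'I_n}) :
  5 / 2 <= M ->
  (forall i, 0 < p i) ->
  opt_makespan_is_one p g ->
  valid_schedule g S -> makespan p S = 1 ->
  A_run p g M Y ->
  forall j : nat, (j <= n)%N ->
    Num.min (1 - 2 / (2 * M + 3)) (o2 p S j) <= load p (Y j).
Proof.
move=> _ pos _ vS mS [Y0 run].
have loadS : load p S <= 1 by rewrite -mS /makespan le_max lexx orbT.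
suff H : forall j, (j <= n)%N ->
  Y j \subset [set i : 'I_n | (i < j)%N] /\
  Num.min (1 - 2 / (2 * M + 3)) (o2 p S j) <= load p (Y j).
  by move=> j hj; case: (H j hj).
elim=> [|j IH] hj.
  rewrite Y0 sub0set; split=> //; rewrite /o2.
  have -> : [set i in S | (i < 0)%N] = set0 :> {set 'I_n}.
    by apply/setP=> i; rewrite !inE ltn0 andbF.
  by rewrite /load !big_set0 ge_min lexx orbT.
have hjn : (j < n)%N by [].
case: (IH (ltnW hjn)) => sub ind.
set k := Ordinal hjn.
have kY : k \notin Y j by apply/negP=> /(subsetP sub); rewrite inE ltnn.
have oE : o2 p S j.+1 = o2 p S j + (if k \in S then p k else 0).
  rewrite /o2 /load; case: ifP => kS.
    have -> : [set i in S | (i < j.+1)%N] = k |: [set i in S | (i < j)%N].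
      apply/setP=> i; rewrite !inE ltnS leq_eqVlt.
      case: (i =P k) => [-> | ne]; first by rewrite kS eqxx.
      have -> : (val i == j) = false by apply/eqP => h; apply: ne; exact: (@val_inj _ _ _ i k h).
      by [].
    by rewrite big_setU1 /= ?inE ?ltnn ?andbF // addrC.
  rewrite addr0; apply: eq_bigl => i; rewrite !inE ltnS leq_eqVlt.
  case: (i =P k) => [-> | ne]; first by rewrite kS.
  have -> : (val i == j) = false by apply/eqP => h; apply: ne; exact: (@val_inj _ _ _ i k h).
  by [].
have subC : Y j \subset [set i : 'I_n | (i < j.+1)%N].
  by apply: (subset_trans sub); apply/subsetP=> i; rewrite !inE => /ltnW.
have step := run j hjn; rewrite /A_step -/k in step.
case: ifP step => [c1 -> | c1].
  split=> //.
  case/orP: c1 => [g1 | big].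
    have kS : k \notin S by apply/negP=> /vS gk; move: g1; rewrite gk.
    by rewrite oE (negbTE kS) addr0.
  by rewrite ge_min big.
case: ifP => [c2 -> | c2].
  split.
    apply/subsetP=> i; rewrite !inE => /orP [/eqP -> | /(subsetP sub)] //=.
    by rewrite inE => /ltnW.
  rewrite /load big_setU1 //= -/(load p (Y j)) oE.
  move: ind; rewrite !ge_min => /orP [h | h]; apply/orP.
    left; apply: (le_trans h); by rewrite -{1}(add0r (load p (Y j))) lerD2r ltW.
  right; rewrite addrC lerD //; case: ifP => _ //; exact: ltW.
move=> [sY' lY' mx].
set C := _ :|: _ :|: _ in sY' mx.
have sC : C \subset [set i : 'I_n | (i < j.+1)%N].
  apply/subsetP=> i; rewrite !inE => /orP [/orP [/andP [/andP [h _] _] | /(subsetP sub)] | /eqP ->] //=.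
    exact: ltnW.
  by rewrite inE => /ltnW.
split; first exact: subset_trans sY' sC.
have WC : [set i in S | (i < j.+1)%N] \subset C.
  apply/subsetP=> i; rewrite !inE => /andP [iS]; rewrite ltnS leq_eqVlt.
  case: (i =P k) => [-> | ne]; first by rewrite eqxx !orbT.
  have -> : (val i == j) = false by apply/eqP => h; apply: ne; exact: (@val_inj _ _ _ i k h).
  move=> /= ilt; rewrite ilt (vS _ iS) /=.
  by case: (i \in Y j); rewrite ?orbT.
have lW : o2 p S j.+1 <= 1.
  apply: le_trans loadS; apply: load_sub => //; apply/subsetP=> i; rewrite inE.
  by case/andP.
by rewrite ge_min (mx _ WC lW) orbT.
Qed.
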